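(* Let $X=\{x_0,\ldots,x_m\}$ and $\tilde X=\{\tilde x_1,\ldots,\tilde x_q\}$ (commuting). The multiplicative static feedback product $c\,\bar{@}\,d:=c\,\tilde\circ\,\delta_{(d^{-1}\circ c)^{\circ-1}}$ (with $d^{-1}\circ c$ the Wiener-Fliess composition product) is a right group action of the Abelian group $(\mathbb{R}^m_{pi}[[\tilde X]],\cdot,\mathbb 1)$ on the set of proper series in $\mathbb{R}^q\langle\langle X\rangle\rangle$; that is, for all proper $c\in\mathbb{R}^q\langle\langle X\rangle\rangle$ and all purely improper $d_1,d_2\in\mathbb{R}^m[[\tilde X]]$, $c\,\bar{@}\,\mathbb 1=c$ and $(c\,\bar{@}\,d_1)\,\bar{@}\,d_2=c\,\bar{@}\,(d_1\cdot d_2)$.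
   Context: Series conventions: $\mathbb{R}^\ell\langle\langle X\rangle\rangle$ noncommutative formal power series with coefficients in $\mathbb{R}^\ell$, $\mathbb{R}^m[[\tilde X]]$ commutative formal power series with coefficients in $\mathbb{R}^m$; componentwise products; proper = zero constant term; purely improper = each component has nonzero constant term; $\mathbb{R}^m_{pi}[[\tilde X]]$ the purely improper commutative series; $\cdot$ the Cauchy product $(d\cdot d',\eta)=\sum_{\zeta\nu=\eta}(d,\zeta)(d',\nu)$; $d^{-1}$ the Cauchy inverse; $\mathbb 1=[1\cdots1]^t$. Shuffle product $\sqcup\!\sqcup$: bilinear, $(x_i\eta)\sqcup\!\sqcup(x_j\xi)=x_i(\eta\sqcup\!\sqcup x_j\xi)+x_j(x_i\eta\sqcup\!\sqcup\xi)$, $\eta\sqcup\!\sqcup\emptyset=\emptyset\sqcup\!\sqcup\eta=\eta$; $g^{\sqcup\!\sqcup-1}$ componentwise shuffle inverse. Wiener-Fliess composition for proper $c$: $d\circ c=\sum_{\tilde\eta}(d,\tilde\eta)c^{\sqcup\!\sqcup\tilde\eta}$, $c^{\sqcup\!\sqcup\emptyset}=1$, $c^{\sqcup\!\sqcup\tilde x_i\tilde\eta}=c_i\sqcup\!\sqcup c^{\sqcup\!\sqcup\tilde\eta}$. Multiplicative mixed composition: $c\,\tilde\circ\,\delta_g=\sum_\eta(c,\eta)\bar\phi_g(\eta)(\mathbf 1)$, $\mathbf 1=1\emptyset$, $\bar\phi_g(x_0)(w)=x_0w$, $\bar\phi_g(x_i)(w)=x_i(g_i\sqcup\!\sqcup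 w)$ ($i\ge1$), extended multiplicatively (concatenation to composition). For purely improper $g\in\mathbb{R}^m\langle\langle X\rangle\rangle$, $g^{\circ-1}$ is the unique $h\in\mathbb{R}^m\langle\langle X\rangle\rangle$ with $h=g^{\sqcup\!\sqcup-1}\,\tilde\circ\,\delta_h$. *)

(* Defs.v *)
From HB Require Import structures.
From mathcomp Require Import all_boot all_order all_algebra.
From mathcomp Require Import reals.
From Stdlib Require Import ClassicalEpsilon.

Set Implicit Arguments.
Unset Strict Implicit.
Unset Printing Implicit Defensive.
Import Order.TTheory GRing.Theory Num.Theory.
Local Open Scope ring_scope.

Section Series.
Variable R : realType.

(* Alphabet X = {x_0,...,x_m} is 'I_m.+1; a word is a seq of letters. *)
Definition word (m : nat) := seq 'I_m.+1.
Definition sser (m : nat) := word m -> R.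
Definition nser (m l : nat) := word m -> 'I_l -> R.
(* Commutative words over X~ = {x~_1..x~_q}: exponent vectors. *)
Definition cmono (q : nat) := {ffun 'I_q -> nat}.
Definition cser (q l : nat) := cmono q -> 'I_l -> R.

Definition cmono0 (q : nat) : cmono q := [ffun => 0%N].

Definition comp (m l : nat) (c : nser m l) (j : 'I_l) : sser m := fun w => c w j.

Definition sone (m : nat) : sser m := fun w => if w is [::] then 1 else 0.

Section Defs.
Variables m q l : nat.



Definition lder (x : 'I_m.+1) (c : sser m) : sser m := fun u => c (x :: u).

Fixpoint shuffle (c d : sser m) (w : word m) {struct w} : R :=
  match w with
  | [::] => c [::] * d [::]
  | x :: w' => shuffle (lder x c) d w' + shuffle c (lder x d) w'
  end.

Definition nproper (c : nser m l) : Prop := forall i, c [::] i = 0.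

Definition cpimproper (d : cser q l) : Prop := forall i, d (cmono0 q) i != 0.

Definition cprod (d d' : cser q l) : cser q l := fun eta i =>
  \sum_(z : {ffun 'I_q -> 'I_(\sum_(j < q) eta j).+1} | [forall j, (z j <= eta j)%N])
     d [ffun j => nat_of_ord (z j)] i * d' [ffun j => (eta j - z j)%N] i.

Definition cone : cser q l := fun eta _ => if eta == cmono0 q then 1 else 0.

Definition cinv (d : cser q l) : cser q l :=
  epsilon (inhabits (fun _ _ => 0)) (fun h => cprod d h = cone).

Definition shpow (c : nser m q) (eta : cmono q) : sser m :=
  foldr (fun j acc => iter (eta j) (shuffle (comp c j)) acc) (@sone m) (enum 'I_q).

(* Wiener-Fliess composition d∘c = Σ_η~ (d,η~) c^{⧢η~}, for proper c.
   Only η~ with |η~| <= |w| contribute to the coefficient of w (c proper). *)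
Definition wfcomp (d : cser q l) (c : nser m q) : nser m l := fun w i =>
  \sum_(z : {ffun 'I_q -> 'I_(size w).+1} | (\sum_(j < q) (z j : nat) <= size w)%N)
     d [ffun j => nat_of_ord (z j)] i * shpow c [ffun j => nat_of_ord (z j)] w.

End Defs.

Section Mixed.
Variables m l : nat.

(* phi_g(x_0)(v) = x_0 v ; phi_g(x_i)(v) = x_i (g_i ⧢ v), i >= 1
   (letter x_i, i >= 1, uses component i-1 of g : R^m). *)
Definition phil (g : nser m m) (x : 'I_m.+1) (v : sser m) : sser m := fun u =>
  match u with
  | [::] => 0
  | y :: u' => if y == x then
                 match unlift ord0 x with
                 | None => v u'
                 | Some j => shuffle (comp g j) v u'
                 end
               else 0
  end.

Fixpoint phi (g : nser m m) (eta : word m) : sser m -> sser m :=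
  match eta with
  | [::] => id
  | x :: e => fun v => phil g x (phi g e v)
  end.

(* c ~∘ δ_g = Σ_η (c,η) phi_g(η)(1); only |η| <= |w| contributes. *)
Definition mixed (c : nser m l) (g : nser m m) : nser m l := fun w i =>
  \sum_(n < (size w).+1) \sum_(t : n.-tuple 'I_m.+1) c (tval t) i * phi g (tval t) (@sone m) w.

End Mixed.

Section Inverses.
Variable m : nat.

Definition shinv (g : nser m m) : nser m m :=
  epsilon (inhabits (fun _ _ => 0))
    (fun h => forall j, shuffle (comp g j) (comp h j) = @sone m).

(* g^{∘-1}: the unique h with h = g^{⧢-1} ~∘ δ_h *)
Definition compinv (g : nser m m) : nser m m :=
  epsilon (inhabits (fun _ _ => 0)) (fun h => h = mixed (shinv g) h).

End Inverses.

Definition feedback (m q : nat) (c : nser m q) (d : cser q m) : nser m q :=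
  mixed c (compinv (wfcomp (cinv d) c)).

End Series.

(* Main.v *)
Require Import Defs.
From HB Require Import structures.
From mathcomp Require Import all_boot all_order all_algebra.
From mathcomp Require Import reals ring.
From Stdlib Require Import ClassicalEpsilon FunctionalExtensionality.
Set Implicit Arguments.
Unset Strict Implicit.
Unset Printing Implicit Defensive.
Import Order.TTheory GRing.Theory Num.Theory.
Local Open Scope ring_scope.

Section Generic.
Variables (D A : Type) (sz : D -> nat) (T : (D -> A) -> (D -> A)) (f0 : D -> A).
Hypothesis Tc : forall n (f f' : D -> A), (forall d, (sz d < n)%N -> f d = f' d) ->
  forall d, (sz d <= n)%N -> T f d = T f' d.

Definition fixp : D -> A := fun d => iter (sz d).+1 T f0 d.

Lemma iter_agree k j : forall d, (sz d < k)%N -> iter k T f0 d = iter (k + j) T f0 d.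
Proof.
elim: k => [//|k IH] d Hd.
rewrite addSn /=; apply: (Tc (n:=k)) => // e He; exact: IH.
Qed.

Lemma fixpE : T fixp = fixp.
Proof.
apply: functional_extensionality => d.
rewrite /fixp /=.
apply: (Tc (n := sz d)) => // e He.
have := @iter_agree (sz e).+1 (sz d - (sz e).+1) e (ltnSn _).
by rewrite subnKC.
Qed.

Lemma fix_uniq f f' : T f = f -> T f' = f' -> f = f'.
Proof.
move=> Hf Hf'.
have H : forall n d, (sz d < n)%N -> f d = f' d.
  elim=> [//|n IH] d Hd; rewrite -Hf -Hf'; apply: (Tc (n:=n)) => //.
apply: functional_extensionality => d; exact: (H (sz d).+1).
Qed.
End Generic.

Section Ser.
Variables (R : realType) (m : nat).
Local Notation ser := (sser R m).
Local Notation sh := (@shuffle R m).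

Definition sadd (f g : ser) : ser := fun w => f w + g w.
Definition sscale (k : R) (f : ser) : ser := fun w => k * f w.
Definition szero : ser := fun _ => 0.

Lemma sh_nil (a b : ser) : sh a b [::] = a [::] * b [::].
Proof. by []. Qed.
Lemma sh_cons (a b : ser) x w : sh a b (x :: w) = sh (lder x a) b w + sh a (lder x b) w.
Proof. by []. Qed.
Lemma lder_sh x (a b : ser) : lder x (sh a b) = sadd (sh (lder x a) b) (sh a (lder x b)).
Proof. by []. Qed.

Lemma sh_loc n (a a' b b' : ser) :
  (forall u, (size u <= n)%N -> a u = a' u) -> (forall u, (size u <= n)%N -> b u = b' u) ->
  forall w, (size w <= n)%N -> sh a b w = sh a' b' w.
Proof.
elim: n a a' b b' => [|n IH] a a' b b' Ha Hb [|x w] //= Hw.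
- by rewrite Ha ?Hb.
- by rewrite Ha ?Hb.
- rewrite (IH (lder x a) (lder x a') b b') ?(IH a a' (lder x b) (lder x b')) //.
  + by move=> u Hu; apply: Ha; apply: ltnW.
  + by move=> u Hu; apply: Hb.
  + by move=> u Hu; apply: Ha.
  + by move=> u Hu; apply: Hb; apply: ltnW.
Qed.

Lemma sh_comm (a b : ser) : sh a b = sh b a.
Proof.
apply: functional_extensionality => w.
elim: w a b => [|x w IH] a b /=; first by rewrite mulrC.
by rewrite addrC [sh a _ w]IH [sh (lder x a) _ w]IH.
Qed.

Lemma sh_addl (a a' b : ser) : sh (sadd a a') b = sadd (sh a b) (sh a' b).
Proof.
apply: functional_extensionality => w.
elim: w a a' b => [|x w IH] a a' b /=; first by rewrite /sadd mulrDl.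
change (lder x (sadd a a')) with (sadd (lder x a) (lder x a')).
by rewrite !IH /sadd /= addrACA.
Qed.

Lemma sh_addr (a b b' : ser) : sh a (sadd b b') = sadd (sh a b) (sh a b').
Proof. by rewrite sh_comm sh_addl (sh_comm b) (sh_comm b'). Qed.

Lemma sh_scalel k (a b : ser) : sh (sscale k a) b = sscale k (sh a b).
Proof.
apply: functional_extensionality => w.
elim: w a b => [|x w IH] a b /=; first by rewrite /sscale mulrA.
change (lder x (sscale k a)) with (sscale k (lder x a)).
by rewrite !IH /sscale /= mulrDr.
Qed.

Lemma sh_scaler k (a b : ser) : sh a (sscale k b) = sscale k (sh a b).
Proof. by rewrite sh_comm sh_scalel sh_comm. Qed.

Lemma sh_zerol (b : ser) : sh szero b = szero.
Proof.
have -> : szero = sscale 0 szero by apply: functional_extensionality => w; rewrite /sscale mul0r.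
rewrite sh_scalel; apply: functional_extensionality => w; by rewrite /sscale !mul0r.
Qed.

Lemma sh_zeror (b : ser) : sh b szero = szero.
Proof. by rewrite sh_comm sh_zerol. Qed.

Lemma sh_onel (b : ser) : sh (@sone R m) b = b.
Proof.
apply: functional_extensionality => w.
elim: w b => [|x w IH] b; first by rewrite sh_nil mul1r.
rewrite sh_cons.
have -> : lder x (@sone R m) = szero by [].
by rewrite sh_zerol IH /szero add0r.
Qed.

Lemma sh_oner (b : ser) : sh b (@sone R m) = b.
Proof. by rewrite sh_comm sh_onel. Qed.

Lemma sh_assoc (a b c : ser) : sh (sh a b) c = sh a (sh b c).
Proof.
apply: functional_extensionality => w.
elim: w a b c => [|x w IH] a b c /=; first by rewrite mulrA.
rewrite !lder_sh sh_addl sh_addr /sadd !IH; by rewrite addrA.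
Qed.

Lemma sh_sum (I : Type) (r : seq I) (P : pred I) (F : I -> ser) (b : ser) w :
  sh (fun u => \sum_(i <- r | P i) F i u) b w = \sum_(i <- r | P i) sh (F i) b w.
Proof.
elim: r => [|i r IH].
  rewrite big_nil.
  have -> : (fun u => \sum_(i <- [::] | P i) F i u) = szero.
    by apply: functional_extensionality => u; rewrite big_nil.
  by rewrite sh_zerol.
rewrite big_cons; case HP: (P i); last first.
  rewrite -IH; congr sh; apply: functional_extensionality => u; by rewrite big_cons HP.
have -> : (fun u => \sum_(j <- i :: r | P j) F j u) = sadd (F i) (fun u => \sum_(j <- r | P j) F j u).
  by apply: functional_extensionality => u; rewrite big_cons HP.
by rewrite sh_addl /sadd IH.
Qed.

Lemma sh_sumr (I : Type) (r : seq I) (P : pred I) (F : I -> ser) (b : ser) w :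
  sh b (fun u => \sum_(i <- r | P i) F i u) w = \sum_(i <- r | P i) sh b (F i) w.
Proof. rewrite sh_comm sh_sum; apply: eq_bigr => i _; by rewrite sh_comm. Qed.

End Ser.



Section Ser2.
Variables (R : realType) (m : nat).
Local Notation ser := (sser R m).
Local Notation sh := (@shuffle R m).

Definition ordr n (f : ser) := forall u, (size u < n)%N -> f u = 0.

Lemma ord_lder n x (f : ser) : ordr n f -> ordr n.-1 (lder x f).
Proof.
move=> H u Hu; rewrite /lder; apply: H => /=.
by case: n Hu.
Qed.

Lemma sh_ord i j (a b : ser) : ordr i a -> ordr j b -> ordr (i + j) (sh a b).
Proof.
move=> Ha Hb u; elim: u i j a b Ha Hb => [|x u IH] i j a b Ha Hb /= Hu.
  case: i Ha Hu => [|i] Ha Hu; last by rewrite Ha ?mul0r.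
  by rewrite Hb ?mulr0.
rewrite (IH i.-1 j) ?(IH i j.-1) ?addr0 //; try exact: ord_lder.
- by case: j Hb Hu => [|j] Hb Hu; rewrite ?addn0 ?addnS in Hu *; [apply: ltn_trans Hu|].
- by case: i Ha Hu => [|i] Ha Hu //=; apply: ltn_trans Hu.
Qed.

Lemma sh_contract n (a f f' : ser) : a [::] = 0 ->
  (forall u, (size u < n)%N -> f u = f' u) -> forall w, (size w <= n)%N -> sh a f w = sh a f' w.
Proof.
move=> Ha0.
elim: n f f' => [|n IH] f f' Hf [|x w] //= Hw; try by rewrite Ha0 !mul0r.
have E1 : sh (lder x a) f w = sh (lder x a) f' w.
  by apply: (@sh_loc R m n) => // u Hu; apply: Hf.
have E2 : sh a (lder x f) w = sh a (lder x f') w.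
  by apply: IH => // u Hu; apply: Hf.
by rewrite E1 E2.
Qed.

Definition sinvT (a : ser) (f : ser) : ser :=
  fun w => (a [::])^-1 * (@sone R m w - sh (fun u => a u - a [::] * @sone R m u) f w).

Definition sinv (a : ser) : ser := fixp size (sinvT a) (fun _ => 0).

Lemma sinvT_contract a n (f f' : ser) : (forall u, (size u < n)%N -> f u = f' u) ->
  forall w, (size w <= n)%N -> sinvT a f w = sinvT a f' w.
Proof.
move=> Hf w Hw; rewrite /sinvT (@sh_contract n _ f f') //=.
by rewrite mulr1 subrr.
Qed.

Lemma sinvP (a : ser) : a [::] != 0 -> sh a (sinv a) = @sone R m.
Proof.
move=> Ha.
have Hfix := @fixpE _ _ size (sinvT a) (fun _ => 0) (@sinvT_contract a).
rewrite -/(sinv a) in Hfix.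
set a' := (fun u => a u - a [::] * @sone R m u).
have Ea : a = sadd a' (sscale (a [::]) (@sone R m)).
  by apply: functional_extensionality => u; rewrite /sadd /sscale /a' subrK.
rewrite {1}Ea.
rewrite sh_addl sh_scalel sh_onel; apply: functional_extensionality => w.
have Hw := congr1 (fun f => f w) Hfix; rewrite /= /sinvT -/a' in Hw.
rewrite /sadd /sscale -Hw mulrA mulfV // mul1r.
by rewrite addrC subrK.
Qed.

Lemma sinv_uniq (a b b' : ser) : sh a b = @sone R m -> sh a b' = @sone R m -> b = b'.
Proof.
move=> H H'.
by rewrite -[b]sh_oner -H' -sh_assoc (sh_comm b a) H sh_onel.
Qed.

End Ser2.



Section Tup.
Variables (R : realType) (T : finType).
Lemma sum_tuple0 (F : 0.-tuple T -> R) : \sum_(t : 0.-tuple T) F t = F [tuple].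
Proof. by rewrite (big_pred1 [tuple]) // => t; apply/esym/eqP; exact: tuple0. Qed.

Lemma sum_tupleS n (F : n.+1.-tuple T -> R) :
  \sum_(t : n.+1.-tuple T) F t = \sum_(x : T) \sum_(t : n.-tuple T) F [tuple of x :: t].
Proof.
rewrite pair_big /=.
rewrite (reindex (fun p : T * n.-tuple T => [tuple of p.1 :: p.2])) //.
exists (fun t : n.+1.-tuple T => (thead t, [tuple of behead t])).
- by case=> x t _ /=; congr pair; apply: val_inj.
- by move=> t _ /=; rewrite -tuple_eta.
Qed.
End Tup.

Section Mix.
Variables (R : realType) (m : nat).
Local Notation ser := (sser R m).
Local Notation sh := (@shuffle R m).
Local Notation nsr := (nser R m m).

Definition gsh (g : nsr) (x : 'I_m.+1) (f : ser) : ser :=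
  match unlift ord0 x with None => f | Some j => sh (Defs.comp g j) f end.

Definition MM (g : nsr) (c : ser) : ser := fun w =>
  \sum_(n < (size w).+1) \sum_(t : n.-tuple 'I_m.+1) c (tval t) * phi g (tval t) (@sone R m) w.

Lemma mixedE l (c : nser R m l) g w i : mixed c g w i = MM g (Defs.comp c i) w.
Proof. by []. Qed.

Lemma philE g y (F : ser) x u : phil g y F (x :: u) = if x == y then gsh g y F u else 0.
Proof. by rewrite /phil /gsh; case: (x == y) => //; case: (unlift ord0 y). Qed.

Lemma phil_nil g y (F : ser) : phil g y F [::] = 0.
Proof. by []. Qed.

Lemma gsh_ord g y n (F : ser) : ordr n F -> ordr n (gsh g y F).
Proof.
rewrite /gsh; case: (unlift ord0 y) => [j|] // H.
by rewrite -[n]add0n; apply: sh_ord.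
Qed.

Lemma phi_ord g (t : word m) (v : ser) : ordr (size t) (phi g t v).
Proof.
elim: t => [|y t IH] u Hu; first by rewrite ltn0 in Hu.
case: u Hu => [|x u] Hu; first by [].
change (phil g y (phi g t v) (x :: u) = 0).
rewrite philE; case: (x == y) => //.
exact: (gsh_ord g y IH Hu).
Qed.

Lemma gsh_loc g x n (F F' : ser) : (forall u, (size u <= n)%N -> F u = F' u) ->
  forall w, (size w <= n)%N -> gsh g x F w = gsh g x F' w.
Proof.
rewrite /gsh; case: (unlift ord0 x) => [j|] H w Hw; last exact: H.
by apply: (@sh_loc R m n).
Qed.

Lemma gsh_add g x (F F' : ser) : gsh g x (sadd F F') = sadd (gsh g x F) (gsh g x F').
Proof. by rewrite /gsh; case: (unlift ord0 x) => [j|] //; rewrite sh_addr. Qed.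

Lemma gsh_shl g x (A B : ser) : gsh g x (sh A B) = sh (gsh g x A) B.
Proof. by rewrite /gsh; case: (unlift ord0 x) => [j|] //; rewrite sh_assoc. Qed.

Lemma gsh_shr g x (A B : ser) : gsh g x (sh A B) = sh A (gsh g x B).
Proof.
by rewrite /gsh; case: (unlift ord0 x) => [j|] //; rewrite -!sh_assoc (sh_comm A).
Qed.

Lemma gsh_zero g x : gsh g x (@szero R m) = @szero R m.
Proof. by rewrite /gsh; case: (unlift ord0 x) => [j|] //; rewrite sh_zeror. Qed.

Lemma MM_nil g c : MM g c [::] = c [::].
Proof. by rewrite /MM big_ord1 sum_tuple0 /= mulr1. Qed.

Lemma MM_trunc g c N u : (size u <= N)%N ->
  MM g c u = \sum_(n < N.+1) \sum_(t : n.-tuple 'I_m.+1) c (tval t) * phi g (tval t) (@sone R m) u.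
Proof.
move=> HN; rewrite /MM.
rewrite (big_ord_widen N.+1 (fun n => \sum_(t : n.-tuple 'I_m.+1) c (tval t) * phi g (tval t) (@sone R m) u)) //.
rewrite [RHS](bigID (fun n : 'I_N.+1 => (n < (size u).+1)%N)) /=.
rewrite [X in _ = _ + X]big1 ?addr0 //.
move=> n; rewrite -leqNgt => Hn; apply: big1 => t _.
by rewrite phi_ord ?mulr0 // size_tuple.
Qed.

Lemma sh_scaler_pt (a f : ser) k w : sh a (fun u => k * f u) w = k * sh a f w.
Proof. exact: (congr1 (fun F => F w) (sh_scaler k a f)). Qed.

Lemma MM_cons g c x : lder x (MM g c) = gsh g x (MM g (lder x c)).
Proof.
apply: functional_extensionality => w.
rewrite /lder {1}/MM /= big_ord_recl sum_tuple0 /= mulr0 add0r.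
have E : forall n : 'I_(size w).+1,
   \sum_(t : n.+1.-tuple 'I_m.+1) c (tval t) * phi g (tval t) (@sone R m) (x :: w) =
   \sum_(t : n.-tuple 'I_m.+1) c (x :: tval t) * gsh g x (phi g (tval t) (@sone R m)) w.
  move=> n; rewrite sum_tupleS (bigD1 x) //.
  rewrite [X in _ + X = _]big1 ?addr0.
    apply: eq_bigr => t _.
    change (c (x :: tval t) * phil g x (phi g (tval t) (@sone R m)) (x :: w) = 
       c (x :: tval t) * gsh g x (phi g (tval t) (@sone R m)) w).
    by rewrite philE eqxx.
  move=> y Hy; apply: big1 => t _.
  change (c (y :: tval t) * phil g y (phi g (tval t) (@sone R m)) (x :: w) = 0).
  by rewrite philE eq_sym (negbTE Hy) mulr0.
rewrite (eq_bigr _ (fun n _ => E n)) /gsh.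
case: (unlift ord0 x) => [j|] //.
rewrite (@sh_loc R m (size w) (Defs.comp g j) (Defs.comp g j) _
  (fun u => \sum_(n < (size w).+1) \sum_(t : n.-tuple 'I_m.+1) c (x :: tval t) * phi g (tval t) (@sone R m) u)) //.
  rewrite sh_sumr; apply: eq_bigr => n _.
  rewrite sh_sumr; apply: eq_bigr => t _.
  by rewrite sh_scaler_pt.
by move=> u Hu; rewrite (MM_trunc _ _ Hu).
Qed.

End Mix.



Section Mix2.
Variables (R : realType) (m : nat).
Local Notation ser := (sser R m).
Local Notation sh := (@shuffle R m).
Local Notation nsr := (nser R m m).

Lemma ser_ind (P : word m -> Prop) : P [::] ->
  (forall x w, (forall u, (size u <= size w)%N -> P u) -> P (x :: w)) -> forall w, P w.
Proof.
move=> H0 HS.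
have H : forall n w, (size w <= n)%N -> P w.
  elim=> [|n IH] [|x w] //= Hw.
  by apply: HS => u Hu; apply: IH; apply: leq_trans Hu Hw.
by move=> w; apply: (H (size w)).
Qed.

Lemma MM_cons_pt (g : nsr) c x w : MM g c (x :: w) = gsh g x (MM g (lder x c)) w.
Proof. exact: (congr1 (fun F => F w) (MM_cons g c x)). Qed.

Lemma MM_add (g : nsr) (a b : ser) : MM g (sadd a b) = sadd (MM g a) (MM g b).
Proof.
apply: functional_extensionality => w; rewrite /MM /sadd -big_split; apply: eq_bigr => n _.
rewrite -big_split; apply: eq_bigr => t _; by rewrite mulrDl.
Qed.

Lemma MM_scale (g : nsr) k (a : ser) : MM g (sscale k a) = sscale k (MM g a).
Proof.
apply: functional_extensionality => w; rewrite /MM /sscale mulr_sumr; apply: eq_bigr => n _.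
rewrite mulr_sumr; apply: eq_bigr => t _; by rewrite mulrA.
Qed.

Lemma MM_zero (g : nsr) : MM g (@szero R m) = @szero R m.
Proof.
apply: functional_extensionality => w; rewrite /MM /szero; apply: big1 => n _.
by apply: big1 => t _; rewrite mul0r.
Qed.

Lemma MM_sum (g : nsr) (I : Type) (r : seq I) (P : pred I) (F : I -> ser) w :
  MM g (fun t => \sum_(i <- r | P i) F i t) w = \sum_(i <- r | P i) MM g (F i) w.
Proof.
rewrite /MM.
transitivity (\sum_(n < (size w).+1) \sum_(i <- r | P i) \sum_(t : n.-tuple 'I_m.+1)
   F i (tval t) * phi g (tval t) (@sone R m) w).
  apply: eq_bigr => n _; rewrite exchange_big; apply: eq_bigr => t _; by rewrite mulr_suml.
by rewrite exchange_big.
Qed.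

Lemma MM_loc (g : nsr) n (f f' : ser) : (forall u, (size u <= n)%N -> f u = f' u) ->
  forall w, (size w <= n)%N -> MM g f w = MM g f' w.
Proof.
move=> H w Hw; rewrite /MM; apply: eq_bigr => k _; apply: eq_bigr => t _.
rewrite H // size_tuple; apply: leq_trans Hw; by rewrite -ltnS.
Qed.

Lemma MM_contract n (g g' : nsr) : (forall u, (size u < n)%N -> g u = g' u) ->
  forall c w, (size w <= n)%N -> MM g c w = MM g' c w.
Proof.
elim: n => [|n IH] Hg c [|x w] Hw; rewrite ?MM_nil //.
rewrite !MM_cons_pt.
have E : gsh g x (MM g (lder x c)) w = gsh g x (MM g' (lder x c)) w.
  apply: (@gsh_loc R m g x (size w)) => // u Hu.
  apply: IH; [by move=> v Hv; apply: Hg; apply: ltnW | exact: leq_trans Hu Hw].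
rewrite E /gsh; case: (unlift ord0 x) => [j|] //.
apply: (@sh_loc R m (size w)) => // u Hu.
by rewrite /Defs.comp Hg //; apply: leq_ltn_trans Hu _.
Qed.

Definition ones : nsr := fun w _ => @sone R m w.

Lemma MM_ones c : MM ones c = c.
Proof.
apply: functional_extensionality => w; elim: w c => [|x w IH] c; first by rewrite MM_nil.
rewrite MM_cons_pt /gsh; case: (unlift ord0 x) => [j|].
  have -> : Defs.comp ones j = @sone R m by [].
  by rewrite sh_onel IH.
by rewrite IH.
Qed.

Lemma MM_sone (g : nsr) : MM g (@sone R m) = @sone R m.
Proof.
apply: functional_extensionality => w; case: w => [|x w]; first by rewrite MM_nil.
rewrite MM_cons_pt.
have -> : lder x (@sone R m) = @szero R m by [].
by rewrite MM_zero gsh_zero.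
Qed.

Lemma MM_sh (g : nsr) (a b : ser) : MM g (sh a b) = sh (MM g a) (MM g b).
Proof.
apply: functional_extensionality => w; move: a b; elim/ser_ind: w => [|x w IH] a b.
  by rewrite MM_nil !sh_nil !MM_nil.
rewrite MM_cons_pt lder_sh MM_add.
have E : gsh g x (sadd (MM g (sh (lder x a) b)) (MM g (sh a (lder x b)))) w =
   gsh g x (sadd (sh (MM g (lder x a)) (MM g b)) (sh (MM g a) (MM g (lder x b)))) w.
  by apply: (@gsh_loc R m g x (size w)) => // u Hu; rewrite /sadd !IH.
rewrite E.
by rewrite gsh_add gsh_shl gsh_shr /sadd sh_cons !MM_cons.
Qed.

Definition star (h1 h2 : nsr) : nsr :=
  fun w j => sh (MM h2 (Defs.comp h1 j)) (Defs.comp h2 j) w.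

Lemma MM_comp (h1 h2 : nsr) c : MM h2 (MM h1 c) = MM (star h1 h2) c.
Proof.
apply: functional_extensionality => w; move: c; elim/ser_ind: w => [|x w IH] c.
  by rewrite !MM_nil.
rewrite !MM_cons_pt MM_cons /gsh; case: (unlift ord0 x) => [j|]; last exact: IH.
rewrite MM_sh.
have E : sh (Defs.comp (star h1 h2) j) (MM (star h1 h2) (lder x c)) w =
  sh (Defs.comp (star h1 h2) j) (MM h2 (MM h1 (lder x c))) w.
  by apply: (@sh_loc R m (size w)) => // u Hu; rewrite IH.
rewrite E.
have -> : Defs.comp (star h1 h2) j = sh (MM h2 (Defs.comp h1 j)) (Defs.comp h2 j) by [].
by rewrite -sh_assoc (sh_comm (Defs.comp h2 j)).
Qed.

End Mix2.



Section Inv.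
Variables (R : realType) (m : nat).
Local Notation ser := (sser R m).
Local Notation sh := (@shuffle R m).
Local Notation nsr := (nser R m m).

Lemma comp_mixed l (c : nser R m l) g i : Defs.comp (mixed c g) i = MM g (Defs.comp c i).
Proof. by []. Qed.

Lemma shinv_spec (g : nsr) : (forall j, g [::] j != 0) ->
  forall j, sh (Defs.comp g j) (Defs.comp (shinv g) j) = @sone R m.
Proof.
move=> Hg.
apply: (epsilon_spec (inhabits (fun _ _ => 0)) (fun h : nsr => forall j, sh (Defs.comp g j) (Defs.comp h j) = @sone R m)).
exists (fun w j => sinv (Defs.comp g j) w) => j.
exact: (sinvP (Hg j)).
Qed.

Lemma compT_contract (s : nsr) n (f f' : nsr) : (forall d, (size d < n)%N -> f d = f' d) ->
  forall d, (size d <= n)%N -> mixed s f d = mixed s f' d.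
Proof.
move=> H d Hd; apply: functional_extensionality => j; rewrite !mixedE.
exact: (MM_contract H).
Qed.

Lemma compinv_fix (g : nsr) : compinv g = mixed (shinv g) (compinv g).
Proof.
apply: (epsilon_spec (inhabits (fun _ _ => 0)) (fun h : nsr => h = mixed (shinv g) h)).
exists (fixp size (fun h : nsr => mixed (shinv g) h) (fun _ _ => 0)).
apply: esym; apply: fixpE => n f f'; exact: compT_contract.
Qed.

Lemma compinv_spec (g : nsr) : (forall j, g [::] j != 0) ->
  forall j, sh (MM (compinv g) (Defs.comp g j)) (Defs.comp (compinv g) j) = @sone R m.
Proof.
move=> Hg j.
have -> : Defs.comp (compinv g) j = MM (compinv g) (Defs.comp (shinv g) j).
  by rewrite -comp_mixed -compinv_fix.
by rewrite -MM_sh shinv_spec // MM_sone.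
Qed.

Lemma compinv_char (g H : nsr) : (forall j, g [::] j != 0) ->
  (forall j, sh (MM H (Defs.comp g j)) (Defs.comp H j) = @sone R m) -> compinv g = H.
Proof.
move=> Hg HH.
apply: (@fix_uniq _ _ size (fun h : nsr => mixed (shinv g) h)).
- move=> n f f'; exact: compT_contract.
- exact: esym (compinv_fix g).
apply: functional_extensionality => w; apply: functional_extensionality => j.
rewrite mixedE.
have E : Defs.comp H j = MM H (Defs.comp (shinv g) j).
  apply: (@sinv_uniq R m (MM H (Defs.comp g j))); first exact: HH.
  by rewrite -MM_sh shinv_spec // MM_sone.
by rewrite -E.
Qed.

End Inv.



Section Comm.
Variables (R : realType) (q : nat).
Local Notation mon := (cmono q).

Definition mono K (z : {ffun 'I_q -> 'I_K}) : mon := [ffun j => nat_of_ord (z j)].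
Definition madd (e f : mon) : mon := [ffun j => (e j + f j)%N].
Definition msub (e f : mon) : mon := [ffun j => (e j - f j)%N].
Definition deg (e : mon) : nat := (\sum_(j < q) e j)%N.

Lemma box_widen K1 K2 (P : pred mon) (F : mon -> R) : (K1 <= K2)%N ->
  (forall e, P e -> forall j, (e j <= K1)%N) ->
  \sum_(z : {ffun 'I_q -> 'I_K2.+1} | P (mono z)) F (mono z) =
  \sum_(z : {ffun 'I_q -> 'I_K1.+1} | P (mono z)) F (mono z).
Proof.
move=> HK HP.
have HK' : (K1.+1 <= K2.+1)%N by rewrite ltnS.
pose h := fun z : {ffun 'I_q -> 'I_K1.+1} => [ffun j => widen_ord HK' (z j)].
pose h' := fun z : {ffun 'I_q -> 'I_K2.+1} => [ffun j => (inord (z j) : 'I_K1.+1)].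
have Hm : forall z, mono (h z) = mono z by move=> z; apply/ffunP => j; rewrite !ffunE.
rewrite (reindex_onto h h') /=.
  apply: eq_big => z; last by rewrite Hm.
  rewrite Hm; case: (P (mono z)) => //=; apply/eqP/ffunP => j.
  by apply: val_inj; rewrite !ffunE /= inordK // ltn_ord.
move=> z Hz; apply/ffunP => j; apply: val_inj; rewrite !ffunE /= inordK //.
by rewrite ltnS; have := HP _ Hz j; rewrite ffunE.
Qed.

Lemma box_eq K1 K2 (P : pred mon) (F : mon -> R) :
  (forall e, P e -> forall j, (e j <= minn K1 K2)%N) ->
  \sum_(z : {ffun 'I_q -> 'I_K1.+1} | P (mono z)) F (mono z) =
  \sum_(z : {ffun 'I_q -> 'I_K2.+1} | P (mono z)) F (mono z).
Proof.
move=> HP; case: (leqP K1 K2) => H.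
  rewrite (@box_widen K1 K2 P F H) // => e He j; have := HP e He j; by rewrite (minn_idPl H).
rewrite (@box_widen K2 K1 P F (ltnW H)) // => e He j.
by have := HP e He j; rewrite (minn_idPr (ltnW H)).
Qed.

Lemma mono_eq0 K (z : {ffun 'I_q -> 'I_K.+1}) : (mono z == cmono0 q) = (z == [ffun => ord0]).
Proof.
apply/eqP/eqP => [H|->].
  apply/ffunP => j; apply: val_inj; have := congr1 (fun f : mon => f j) H; by rewrite !ffunE.
by apply/ffunP => j; rewrite !ffunE.
Qed.

Lemma deg_msub_lt (e f : mon) : (forall j, f j <= e j)%N -> f != cmono0 q ->
  (deg (msub e f) < deg e)%N.
Proof.
move=> Hle Hf.
have E : (deg (msub e f) + deg f)%N = deg e.
  rewrite /deg -big_split /=; apply: eq_bigr => j _; by rewrite ffunE subnK.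
have : (0 < deg f)%N.
  case: (posnP (deg f)) => // /eqP; rewrite /deg sum_nat_eq0 => /forallP H0.
  by move/eqP: Hf; case; apply/ffunP => j; rewrite ffunE; apply/eqP; have := H0 j.
by rewrite -E -{1}[deg (msub e f)]addn0 ltn_add2l.
Qed.

Section L.
Variable l : nat.
Local Notation cs := (cser R q l).

Lemma cprod_z0 (d f : cs) (eta : mon) i :
  (forall z : {ffun 'I_q -> 'I_(\sum_(j < q) eta j).+1}, [forall j, (z j <= eta j)%N] ->
      z != [ffun => ord0] -> d (mono z) i * f (msub eta (mono z)) i = 0) ->
  cprod d f eta i = d (cmono0 q) i * f eta i.
Proof.
move=> H; rewrite /cprod (bigD1 [ffun => ord0]) /=; last by apply/forallP => j; rewrite ffunE.
rewrite [X in _ + X]big1 ?addr0.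
  have -> : [ffun j => nat_of_ord (([ffun=> ord0] : {ffun 'I_q -> 'I_(\sum_(j < q) eta j).+1}) j)] = cmono0 q.
    by apply/ffunP => j; rewrite !ffunE.
  have -> : [ffun j => (eta j - ([ffun=> ord0] : {ffun 'I_q -> 'I_(\sum_(j < q) eta j).+1}) j)%N] = eta.
    by apply/ffunP => j; rewrite !ffunE subn0.
  by [].
move=> z /andP [Hz Hz0]; rewrite -(H z Hz Hz0).
have -> : [ffun j => (eta j - z j)%N] = msub eta (mono z) by apply/ffunP => j; rewrite !ffunE.
by [].
Qed.

Lemma cprod_sub (d f f' : cs) eta i :
  cprod d f eta i - cprod d f' eta i = cprod d (fun e k => f e k - f' e k) eta i.
Proof. rewrite /cprod -sumrB; apply: eq_bigr => z _; by rewrite mulrBr. Qed.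

Definition cinvT (d : cs) (f : cs) : cs := fun eta i =>
  f eta i + (@cone R q l eta i - cprod d f eta i) / d (cmono0 q) i.

Lemma cinvT_contract (d : cs) : cpimproper d -> forall n (f f' : cs),
  (forall e, (deg e < n)%N -> f e = f' e) -> forall e, (deg e <= n)%N -> cinvT d f e = cinvT d f' e.
Proof.
move=> Hd n f f' H e He; apply: functional_extensionality => i.
have E : cprod d f e i - cprod d f' e i = d (cmono0 q) i * (f e i - f' e i).
  rewrite cprod_sub cprod_z0 // => z Hz Hz0.
  have Hlt : (deg (msub e (mono z)) < deg e)%N.
    apply: deg_msub_lt; first by move=> j; rewrite ffunE; have := forallP Hz j.
    by rewrite mono_eq0.
  by rewrite H ?subrr ?mulr0 //; apply: leq_trans Hlt He.
apply/eqP; rewrite -subr_eq0; apply/eqP.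
rewrite /cinvT.
have Hd0 := Hd i.
rewrite -[f e i](subrK (f' e i)) -[cprod d f e i](subrK (cprod d f' e i)) E.
field.
exact: Hd0.
Qed.

Lemma cinv_spec (d : cs) : cpimproper d -> cprod d (cinv d) = @cone R q l.
Proof.
move=> Hd.
apply: (epsilon_spec (inhabits (fun _ _ => 0)) (fun h : cs => cprod d h = @cone R q l)).
exists (fixp deg (cinvT d) (fun _ _ => 0)).
have Hfix := @fixpE _ _ deg (cinvT d) (fun _ _ => 0) (cinvT_contract Hd).
set h := fixp _ _ _ in Hfix *.
apply: functional_extensionality => e; apply: functional_extensionality => i.
have := congr1 (fun F => F e i) Hfix; rewrite /cinvT addrC => /eqP.
rewrite -subr_eq0 addrK mulf_eq0 invr_eq0 (negbTE (Hd i)) orbF subr_eq0 => /eqP.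
by move=> ->.
Qed.

End L.
End Comm.



Section WF.
Variables (R : realType) (m q : nat).
Local Notation ser := (sser R m).
Local Notation sh := (@shuffle R m).
Local Notation mon := (cmono q).
Local Notation cvec := (nser R m q).

Lemma iter_shl k (A X Y : ser) : iter k (sh A) (sh X Y) = sh (iter k (sh A) X) Y.
Proof. by elim: k => [|k IH] //=; rewrite IH sh_assoc. Qed.

Lemma iter_shr k (A X Y : ser) : iter k (sh A) (sh X Y) = sh X (iter k (sh A) Y).
Proof. by rewrite sh_comm iter_shl sh_comm. Qed.

Lemma shpow_add (c : cvec) (e f : mon) : shpow c (madd e f) = sh (shpow c e) (shpow c f).
Proof.
rewrite /shpow; elim: (enum 'I_q) => [|j s IH] /=; first by rewrite sh_onel.
by rewrite IH ffunE iterD iter_shr iter_shl.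
Qed.

Lemma shpow_zero (c : cvec) : shpow c (cmono0 q) = @sone R m.
Proof. by rewrite /shpow; elim: (enum 'I_q) => [|j s IH] //=; rewrite ffunE. Qed.

Lemma ordr_le n k (f : ser) : ordr n f -> (k <= n)%N -> ordr k f.
Proof. by move=> H Hk u Hu; apply: H; apply: leq_trans Hu Hk. Qed.

Lemma iter_ord (A X : ser) k n : ordr 1 A -> ordr n X -> ordr (k + n) (iter k (sh A) X).
Proof.
move=> HA HX; elim: k => [|k IH] //=.
by rewrite -[(k.+1 + n)%N]/(1 + (k + n))%N; apply: sh_ord.
Qed.

Lemma deg_enum (e : mon) : deg e = (\sum_(j <- enum 'I_q) e j)%N.
Proof. by rewrite big_enum /=; apply: eq_bigl => j; rewrite inE. Qed.

Lemma shpow_ord (c : cvec) (e : mon) : nproper c -> ordr (deg e) (shpow c e).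
Proof.
move=> Hc; rewrite deg_enum /shpow; elim: (enum 'I_q) => [|j s IH] /=.
  by move=> u; rewrite big_nil ltn0.
rewrite big_cons; apply: iter_ord => // u; case: u => // _; exact: Hc.
Qed.

Lemma MM_iter (g : nser R m m) k (A X : ser) : MM g (iter k (sh A) X) = iter k (sh (MM g A)) (MM g X).
Proof. by elim: k => [|k IH] //=; rewrite MM_sh IH. Qed.

Lemma MM_shpow (g : nser R m m) (c : cvec) e : MM g (shpow c e) = shpow (mixed c g) e.
Proof.
rewrite /shpow; elim: (enum 'I_q) => [|j s IH] /=; first exact: MM_sone.
by rewrite MM_iter IH.
Qed.

Lemma coef_le_deg (e : mon) j : (e j <= deg e)%N.
Proof. by rewrite /deg (bigD1 j) //= leq_addr. Qed.

Lemma deg_mono K (z : {ffun 'I_q -> 'I_K}) : deg (mono z) = (\sum_(j < q) (z j : nat))%N.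
Proof. by apply: eq_bigr => j _; rewrite ffunE. Qed.

Section L.
Variable l : nat.
Local Notation cs := (cser R q l).

Lemma W_trunc (d : cs) (c : cvec) i N u : nproper c -> (size u <= N)%N ->
  wfcomp d c u i = \sum_(z : {ffun 'I_q -> 'I_N.+1}) d (mono z) i * shpow c (mono z) u.
Proof.
move=> Hc HN.
pose F := fun e : mon => d e i * shpow c e u.
pose P := fun e : mon => (deg e <= size u)%N.
transitivity (\sum_(z : {ffun 'I_q -> 'I_(size u).+1} | P (mono z)) F (mono z)).
  by apply: eq_bigl => z; rewrite /P deg_mono.
rewrite (@box_eq R q (size u) N P F); last first.
  move=> e He j; rewrite (minn_idPl HN); exact: leq_trans (coef_le_deg e j) He.
rewrite [RHS](bigID (fun z => P (mono z))) /= [X in _ = _ + X]big1 ?addr0 //.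
move=> z; rewrite /P -ltnNge => Hz.
by rewrite shpow_ord ?mulr0.
Qed.

Lemma W_nil (d : cs) (c : cvec) i : nproper c -> wfcomp d c [::] i = d (cmono0 q) i.
Proof.
move=> Hc; rewrite (@W_trunc d c i 0) // (big_pred1 [ffun => ord0]).
  have -> : mono ([ffun => ord0] : {ffun 'I_q -> 'I_1}) = cmono0 q by apply/eqP; rewrite mono_eq0.
  by rewrite shpow_zero mulr1.
move=> z /=; apply/esym/eqP/ffunP => j; rewrite ffunE; exact: ord1.
Qed.

Lemma W_cone (c : cvec) : nproper c -> wfcomp (@cone R q l) c = fun w _ => @sone R m w.
Proof.
move=> Hc; apply: functional_extensionality => u; apply: functional_extensionality => i.
rewrite (@W_trunc _ c i (size u)) // (bigD1 [ffun => ord0]) //= big1 ?addr0.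
  rewrite /cone; have -> : mono ([ffun => ord0] : {ffun 'I_q -> 'I_(size u).+1}) = cmono0 q by apply/eqP; rewrite mono_eq0.
  by rewrite eqxx mul1r shpow_zero.
by move=> z Hz; rewrite /cone mono_eq0 (negbTE Hz) mul0r.
Qed.

Lemma MM_scale_pt (g : nser R m m) k (f : ser) w : MM g (fun t => k * f t) w = k * MM g f w.
Proof. exact: (congr1 (fun F => F w) (MM_scale g k f)). Qed.

Lemma W_MM (g : nser R m m) (d : cs) (c : cvec) i : nproper c ->
  MM g (Defs.comp (wfcomp d c) i) = Defs.comp (wfcomp d (mixed c g)) i.
Proof.
move=> Hc; apply: functional_extensionality => u.
have Hc' : nproper (mixed c g) by move=> j; rewrite mixedE MM_nil; exact: Hc.
rewrite /Defs.comp (@W_trunc d (mixed c g) i (size u)) //.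
rewrite (@MM_loc R m g (size u) _ (fun t => \sum_(z : {ffun 'I_q -> 'I_(size u).+1}) d (mono z) i * shpow c (mono z) t)) //; last first.
  by move=> t Ht; rewrite /Defs.comp (@W_trunc d c i (size u)).
rewrite MM_sum; apply: eq_bigr => z _.
by rewrite MM_scale_pt MM_shpow.
Qed.

End L.
End WF.



Lemma inord_out N n : (N < n)%N -> (inord n : 'I_N.+1) = ord0.
Proof. by move=> H; rewrite /inord /insubd insubN //= ltnS -ltnNge. Qed.

Section WP.
Variables (R : realType) (m q l : nat).
Local Notation ser := (sser R m).
Local Notation sh := (@shuffle R m).
Local Notation mon := (cmono q).
Local Notation cvec := (nser R m q).
Local Notation cs := (cser R q l).

Lemma sh_scalel_pt (a f : ser) k w : sh (fun u => k * f u) a w = k * sh f a w.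
Proof. exact: (congr1 (fun F => F w) (sh_scalel k f a)). Qed.

Lemma reindex_step N (u : word m) (c : cvec) (b : cs) i (z : {ffun 'I_q -> 'I_N.+1}) :
  nproper c -> size u = N ->
  \sum_(eta : {ffun 'I_q -> 'I_N.+1} | [forall j, (mono z j <= mono eta j)%N])
     b (msub (mono eta) (mono z)) i * shpow c (mono eta) u =
  \sum_(y : {ffun 'I_q -> 'I_N.+1}) b (mono y) i * shpow c (madd (mono z) (mono y)) u.
Proof.
move=> Hc HN.
pose h := fun y : {ffun 'I_q -> 'I_N.+1} => [ffun j => (inord (z j + y j) : 'I_N.+1)].
pose h' := fun e : {ffun 'I_q -> 'I_N.+1} => [ffun j => (inord (e j - z j) : 'I_N.+1)].
rewrite (reindex_onto h h'); last first.
  move=> e /forallP He; apply/ffunP => j; apply: val_inj; rewrite !ffunE /=.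
  have Hj := He j; rewrite !ffunE in Hj.
  rewrite (@inordK N (e j - z j)); last by rewrite ltnS; apply: leq_trans (leq_subr _ _) _; rewrite -ltnS.
  by rewrite subnKC // inordK.
rewrite big_mkcond [RHS]big_mkcond /=; apply: eq_bigr => y _.
case: (boolP [forall j, (z j + y j <= N)%N]) => Hfit.
  move/forallP: Hfit => Hfit.
  have Hh : mono (h y) = madd (mono z) (mono y).
    by apply/ffunP => j; rewrite !ffunE inordK // ltnS; exact: Hfit.
  have -> : [forall j, (mono z j <= mono (h y) j)%N].
    by apply/forallP => j; rewrite Hh !ffunE leq_addr.
  have -> : h' (h y) == y.
    apply/eqP/ffunP => j; rewrite !ffunE.
    have E1 : nat_of_ord (inord (z j + y j) : 'I_N.+1) = (z j + y j)%N by rewrite inordK // ltnS; exact: Hfit.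
    by rewrite E1 addKn inord_val.
  rewrite /= Hh; congr (b _ i * _); apply/ffunP => j; by rewrite !ffunE addKn.
move: Hfit; rewrite negb_forall => /existsP [j Hj].
rewrite -ltnNge in Hj.
have -> : h' (h y) == y = false.
  apply/negbTE/eqP => E; have := congr1 (fun f : {ffun 'I_q -> 'I_N.+1} => nat_of_ord (f j)) E.
  rewrite /h /h' !ffunE (@inord_out N (z j + y j) Hj) /= => Hy.
  rewrite sub0n inordK // in Hy; move: Hj; rewrite -Hy addn0 ltnNge -ltnS ltn_ord //.
have Hd : (N < deg (madd (mono z) (mono y)))%N.
  apply: leq_trans Hj _; have := coef_le_deg (madd (mono z) (mono y)) j; by rewrite !ffunE.
have Z : shpow c (madd (mono z) (mono y)) u = 0 by apply: shpow_ord => //; rewrite HN.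
by rewrite andbF Z mulr0.
Qed.

Lemma cprod_box N (a b : cs) (eta : {ffun 'I_q -> 'I_N.+1}) i :
  cprod a b (mono eta) i = \sum_(z : {ffun 'I_q -> 'I_N.+1} | [forall j, (mono z j <= mono eta j)%N])
     a (mono z) i * b (msub (mono eta) (mono z)) i.
Proof.
pose P := fun e : mon => [forall j, (e j <= mono eta j)%N].
pose F := fun e : mon => a e i * b (msub (mono eta) e) i.
rewrite /cprod.
transitivity (\sum_(z : {ffun 'I_q -> 'I_(deg (mono eta)).+1} | P (mono z)) F (mono z)).
  apply: eq_big => z.
    by rewrite /P; apply: eq_forallb => j; rewrite !ffunE.
  move=> _; rewrite /F; congr (_ * b _ i); apply/ffunP => j; by rewrite !ffunE.
rewrite (@box_eq R q (deg (mono eta)) N P F) // => e /forallP He j.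
rewrite leq_min; apply/andP; split.
  exact: leq_trans (He j) (coef_le_deg _ _).
by apply: leq_trans (He j) _; rewrite ffunE -ltnS ltn_ord.
Qed.

Lemma W_prod (a b : cs) (c : cvec) i : nproper c ->
  Defs.comp (wfcomp (cprod a b) c) i = sh (Defs.comp (wfcomp a c) i) (Defs.comp (wfcomp b c) i).
Proof.
move=> Hc; apply: functional_extensionality => u.
pose N := size u.
have HN : size u = N by [].
rewrite /Defs.comp.
have E1 : sh (fun w => wfcomp a c w i) (fun w => wfcomp b c w i) u =
  sh (fun t => \sum_(y : {ffun 'I_q -> 'I_N.+1}) a (mono y) i * shpow c (mono y) t)
     (fun t => \sum_(y : {ffun 'I_q -> 'I_N.+1}) b (mono y) i * shpow c (mono y) t) u.
  by apply: (@sh_loc R m N) => // t Ht; apply: W_trunc.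
rewrite E1 sh_sum (@W_trunc R m q l _ c i N u Hc (leqnn _)).
under eq_bigr do rewrite cprod_box mulr_suml.
rewrite (exchange_big_dep predT) //=; apply: eq_bigr => z _.
rewrite sh_scalel_pt sh_sumr.
transitivity (a (mono z) i * \sum_(eta : {ffun 'I_q -> 'I_N.+1} | [forall j, (mono z j <= mono eta j)%N])
     b (msub (mono eta) (mono z)) i * shpow c (mono eta) u).
  by rewrite mulr_sumr; apply: eq_bigr => eta _; rewrite !mulrA.
rewrite reindex_step //; congr (_ * _); apply: eq_bigr => y _.
by rewrite sh_scaler_pt -shpow_add.
Qed.

End WP.



Section Main.
Variables (R : realType) (m q : nat).
Local Notation ser := (sser R m).
Local Notation sh := (@shuffle R m).
Local Notation mon := (cmono q).
Local Notation cs := (cser R q m).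

Lemma sh_ACA (A B C D : ser) : sh (sh A B) (sh C D) = sh (sh A C) (sh B D).
Proof. by rewrite !sh_assoc -(sh_assoc B) (sh_comm B C) sh_assoc. Qed.

Lemma cprod_at0 (d f : cs) i : cprod d f (cmono0 q) i = d (cmono0 q) i * f (cmono0 q) i.
Proof.
apply: cprod_z0 => z /forallP Hz Hz0; exfalso; move/negP: Hz0; apply; apply/eqP/ffunP => j.
apply: val_inj; rewrite ffunE /=; apply/eqP; rewrite -leqn0; have := Hz j; by rewrite ffunE.
Qed.

Lemma cinv0 (d : cs) i : cpimproper d -> cinv d (cmono0 q) i != 0.
Proof.
move=> Hd; apply/eqP => H0.
have := congr1 (fun F => F (cmono0 q) i) (cinv_spec Hd).
by rewrite /= cprod_at0 H0 mulr0 /cone eqxx => /esym/eqP; rewrite oner_eq0.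
Qed.

Lemma cone_pi : cpimproper (@cone R q m).
Proof. by move=> i; rewrite /cone eqxx oner_eq0. Qed.

Lemma cprod_pi (d1 d2 : cs) : cpimproper d1 -> cpimproper d2 -> cpimproper (cprod d1 d2).
Proof. by move=> H1 H2 i; rewrite cprod_at0 mulf_neq0. Qed.

Lemma cprod_cone (f : cs) : cprod (@cone R q m) f = f.
Proof.
apply: functional_extensionality => e; apply: functional_extensionality => i.
rewrite cprod_z0 /cone ?eqxx ?mul1r // => z _ Hz.
by rewrite mono_eq0 (negbTE Hz) mul0r.
Qed.

Lemma cinv_cone : cinv (@cone R q m) = @cone R q m.
Proof. by rewrite -[LHS]cprod_cone (cinv_spec cone_pi). Qed.

Lemma Wx_inv (c : nser R m q) (d : cs) j : nproper c -> cpimproper d ->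
  sh (Defs.comp (wfcomp d c) j) (Defs.comp (wfcomp (cinv d) c) j) = @sone R m.
Proof.
move=> Hc Hd; rewrite -W_prod // cinv_spec // W_cone //.
Qed.

Theorem main (c : nser R m q) (d1 d2 : cs) :
  nproper c -> cpimproper d1 -> cpimproper d2 ->
  feedback c (@cone R q m) = c /\
  feedback (feedback c d1) d2 = feedback c (cprod d1 d2).
Proof.
move=> Hc Hd1 Hd2; split.
  rewrite /feedback cinv_cone W_cone //.
  have -> : compinv (fun w (_ : 'I_m) => @sone R m w) = @ones R m.
    apply: compinv_char => [j|j]; first by rewrite oner_eq0.
    by rewrite MM_ones sh_onel.
  apply: functional_extensionality => w; apply: functional_extensionality => i.
  by rewrite mixedE MM_ones.
set e1 := cinv d1; set e2 := cinv d2; set e := cinv (cprod d1 d2).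
set k1 := wfcomp e1 c; set h1 := compinv k1; set c1 := mixed c h1.
have Hc1 : nproper c1 by move=> i; rewrite /c1 mixedE MM_nil; exact: Hc.
set k2 := wfcomp e2 c1; set h2 := compinv k2.
set k := wfcomp e c.
have Hk : forall j, Defs.comp k j = sh (Defs.comp k1 j) (Defs.comp (wfcomp e2 c) j).
  move=> j.
  have Hd12 := cprod_pi Hd1 Hd2.
  apply: (@sinv_uniq R m (sh (Defs.comp (wfcomp d1 c) j) (Defs.comp (wfcomp d2 c) j))).
    by rewrite -W_prod // Wx_inv.
  by rewrite sh_ACA !Wx_inv // sh_onel.
have Hk1 : forall j, k1 [::] j != 0 by move=> j; rewrite /k1 W_nil // /e1 cinv0.
have Hk2 : forall j, k2 [::] j != 0 by move=> j; rewrite /k2 W_nil // /e2 cinv0.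
have Hk0 : forall j, k [::] j != 0 by move=> j; rewrite /k W_nil // /e cinv0 //; exact: cprod_pi.
have Hh : compinv k = star h1 h2.
  apply: compinv_char => // j.
  rewrite -MM_comp Hk MM_sh W_MM // -/c1 -/k2.
  have -> : Defs.comp (star h1 h2) j = sh (MM h2 (Defs.comp h1 j)) (Defs.comp h2 j) by [].
  rewrite MM_sh sh_ACA -MM_sh compinv_spec // MM_sone sh_onel.
  exact: compinv_spec.
rewrite /feedback -/e1 -/k1 -/h1 -/c1 -/e2 -/k2 -/h2 -/e -/k Hh.
apply: functional_extensionality => w; apply: functional_extensionality => i.
by rewrite !mixedE /c1 comp_mixed MM_comp.
Qed.

End Main.

Unset Implicit Arguments.

Theorem theorem19 (R : realType) (m q : nat) (c : nser R m q) (d1 d2 : cser R q m) :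
  nproper c -> cpimproper d1 -> cpimproper d2 ->
  feedback c (@cone R q m) = c /\
  feedback (feedback c d1) d2 = feedback c (cprod d1 d2).
Proof. exact: main. Qed.
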